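(* Let $\mathcal{S}\subseteq\mathcal{P}_{fin}(\mathbb{N})$ be an IP set, let $\mathcal{B}\subseteq\mathcal{S}$ be finite, let $r\geq 1$, and let $c:NU(\mathcal{S})\rightarrow[1,r]$ be a coloring. Then at least one of the following holds: (1) there is a finite $\mathcal{D}\subseteq\mathcal{S}-\mathcal{B}$ such that for every $S\in(\mathcal{S}-\mathcal{B})-\mathcal{D}$ there is a $D\in NU(\mathcal{D})$ such that $\mathcal{B}$ does not half-match $D\cup S$; or (2) there is an IP set $\mathcal{T}\subseteq\mathcal{S}-\mathcal{B}$ such that $\mathcal{B}$ half-matches $\mathcal{T}$.
   Context: $\mathcal{P}_{fin}(\mathbb{N})$ is the set of finite subsets of $\mathbb{N}$. For $\mathcal{S}\subseteq\mathcal{P}_{fin}(\mathbb{N})$, $NU(\mathcal{S})$ denotes the set of non-empty sets which are unions of finitely many elements of $\mathcal{S}$. A set $\mathcal{S}\subseteq\mathcal{P}_{fin}(\mathbb{N})$ is an IP set if it is closed under finite unions and contains an infinite family of pairwise disjoint elements. For $B\in\mathcal{S}$, $\mathcal{S}-B:=\{T\in\mathcal{S}: T\cap B=\emptyset\}$, and for $\mathcal{B}\subseteq\mathcal{S}$, $\mathcal{S}-\mathcal{B}:=\bigcap_{B\in\mathcal{B}}(\mathcal{S}-B)$. Relative to a coloring $c$: a family $\mathcal{D}$ half-matches a set $B$ if there is $D\in\mathcal{D}$ with $c(B)=c(D\cup B)$; $\mathcal{D}$ half-matches a family $\mathcal{B}$ if it half-matches every $B\in\mathcal{B}$. *)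

(* Defs.v *)
(* Finite subsets of N are represented by their characteristic
   functions nat -> bool (with finite support); families of such sets are
   predicates on them. *)
From Stdlib Require Import List Bool Arith.

Definition setN := nat -> bool.

Definition is_finite (A : setN) : Prop := exists n, forall x, A x = true -> x < n.

Definition union (A B : setN) : setN := fun x => A x || B x.

Definition disjoint (A B : setN) : Prop := forall x, A x && B x = false.

Definition nonempty (A : setN) : Prop := exists x, A x = true.

Definition family := setN -> Prop.

Definition subfamily (F G : family) : Prop := forall A, F A -> G A.

Definition fin_family (F : family) : Prop := subfamily F is_finite.

Definition of_list (l : list setN) : family := fun A => In A l.

Definition bigunion (l : list setN) : setN :=
  fun x => existsb (fun A => A x) l.

Definition NU (S : family) : family :=
  fun T => nonempty T /\ exists l : list setN, (forall A, In A l -> S A) /\ T = bigunion l.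

Definition IP_set (S : family) : Prop :=
  fin_family S /\
  (forall A B, S A -> S B -> S (union A B)) /\
  exists f : nat -> setN,
    (forall i j, f i = f j -> i = j) /\
    (forall i, S (f i)) /\
    (forall i j, i <> j -> disjoint (f i) (f j)).

Definition minus_set (S : family) (B : setN) : family :=
  fun T => S T /\ disjoint T B.

Definition minus_fam (S : family) (Bs : family) : family :=
  fun T => S T /\ forall B, Bs B -> disjoint T B.

Definition half_matches_set (c : setN -> nat) (D : family) (B : setN) : Prop :=
  exists E, D E /\ c B = c (union E B).

Definition half_matches_fam (c : setN -> nat) (D : family) (Bs : family) : Prop :=
  forall B, Bs B -> half_matches_set c D B.

(* Main.v *)
Require Import Defs.
From Stdlib Require Import List Bool Arith Lia.
From Stdlib Require Import Classical ClassicalEpsilon FunctionalExtensionality.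

Lemma ip_far (S : family) : IP_set S -> forall M, exists G, S G /\ nonempty G /\ forall x, G x = true -> M <= x.
Proof.
  intros [_ [Hu [f [Finj [FS Fd]]]]] M.
  set (g := fun i => union (f (2*i)) (f (2*i+1))).
  assert (gS : forall i, S (g i)) by (intro i; apply Hu; apply FS).
  assert (gne : forall i, nonempty (g i)).
  { intro i. destruct (classic (nonempty (f (2*i)))) as [[x Hx]|H1].
    - exists x. unfold g, union. rewrite Hx. reflexivity.
    - destruct (classic (nonempty (f (2*i+1)))) as [[x Hx]|H2].
      + exists x. unfold g, union. rewrite Hx, orb_true_r. reflexivity.
      + exfalso. assert (f (2*i) = f (2*i+1)).
        { extensionality x. destruct (f (2*i) x) eqn:E1.
          - exfalso; apply H1; exists x; auto.
          - destruct (f (2*i+1) x) eqn:E2; auto. exfalso; apply H2; exists x; auto. }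
        apply Finj in H. lia. }
  assert (gd : forall i j, i <> j -> disjoint (g i) (g j)).
  { intros i j Hij x. unfold g, union.
    assert (a1 := Fd (2*i) (2*j) ltac:(lia) x).
    assert (a2 := Fd (2*i) (2*j+1) ltac:(lia) x).
    assert (a3 := Fd (2*i+1) (2*j) ltac:(lia) x).
    assert (a4 := Fd (2*i+1) (2*j+1) ltac:(lia) x).
    destruct (f (2*i) x), (f (2*i+1) x), (f (2*j) x), (f (2*j+1) x); simpl in *; auto. }
  apply NNPP. intro Hn.
  assert (Hw : forall i, exists x, x < M /\ g i x = true).
  { intro i. apply NNPP. intro H. apply Hn. exists (g i). split; [auto|split;[auto|]].
    intros x Hx. destruct (le_lt_dec M x); auto. exfalso; apply H; exists x; auto. }
  set (w := fun i => match find (g i) (seq 0 M) with Some x => x | None => 0 end).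
  assert (ws : forall i, w i < M /\ g i (w i) = true).
  { intro i. unfold w. destruct (find (g i) (seq 0 M)) eqn:E.
    - apply find_some in E. destruct E as [E1 E2]. apply in_seq in E1. split; [lia|auto].
    - destruct (Hw i) as [x [Hx1 Hx2]]. rewrite (find_none _ _ E x) in Hx2. discriminate.
      apply in_seq; lia. }
  assert (ND : NoDup (map w (seq 0 (M+1)))).
  { apply NoDup_map_NoDup_ForallPairs; [|apply seq_NoDup].
    intros a b _ _ Hab. destruct (Nat.eq_dec a b); auto. exfalso.
    assert (h := gd a b n (w a)). destruct (ws a) as [_ h1]. destruct (ws b) as [_ h2].
    rewrite <- Hab in h2. rewrite h1, h2 in h. discriminate. }
  assert (IN : incl (map w (seq 0 (M+1))) (seq 0 M)).
  { intros y Hy. apply in_map_iff in Hy. destruct Hy as [i [<- _]]. apply in_seq.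
    destruct (ws i); lia. }
  assert (L := NoDup_incl_length ND IN). rewrite length_map, !length_seq in L. lia.
Qed.
Lemma union_empty_l Y : union (bigunion nil) Y = Y.
Proof. extensionality x. reflexivity. Qed.

Lemma bigunion_app l l' x : bigunion (l ++ l') x = bigunion l x || bigunion l' x.
Proof. unfold bigunion. apply existsb_app. Qed.

Lemma S_bigunion (S : family) (Hu : forall A B, S A -> S B -> S (union A B)) l :
  (forall A, In A l -> S A) -> forall Y, S Y -> S (union (bigunion l) Y).
Proof.
  induction l as [|A l IH]; intros Hl Y HY.
  - rewrite union_empty_l. exact HY.
  - replace (union (bigunion (A :: l)) Y) with (union A (union (bigunion l) Y)).
    + apply Hu; [apply Hl; left; auto|apply IH; auto; intros; apply Hl; right; auto].
    + extensionality x. unfold union. simpl. rewrite orb_assoc. reflexivity.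
Qed.

Lemma disjoint_bigunion l B : (forall A, In A l -> disjoint A B) -> disjoint (bigunion l) B.
Proof.
  induction l as [|A l IH]; intros Hl x; simpl; auto.
  unfold bigunion in IH. simpl.
  rewrite andb_orb_distrib_l. rewrite (Hl A (or_introl eq_refl) x).
  apply IH. intros; apply Hl; right; auto.
Qed.

Lemma disjoint_union A B C : disjoint A C -> disjoint B C -> disjoint (union A B) C.
Proof. intros h1 h2 x. unfold union. rewrite andb_orb_distrib_l, h1, h2. reflexivity. Qed.

Lemma disjoint_sym A B : disjoint A B -> disjoint B A.
Proof. intros h x. rewrite andb_comm. apply h. Qed.

Lemma fin_list_bound l : (forall A, In A l -> is_finite A) ->
  exists M, forall A x, In A l -> A x = true -> x < M.
Proof.
  induction l as [|A l IH]; intros Hl.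
  - exists 0. intros A x [].
  - destruct IH as [M HM]. intros; apply Hl; right; auto.
    destruct (Hl A (or_introl eq_refl)) as [N HN].
    exists (M + N). intros B x [<-|H] Hx.
    + specialize (HN x Hx). lia.
    + specialize (HM B x H Hx). lia.
Qed.

Definition valid (S : family) (Bl Dl : list setN) :=
  subfamily (of_list Dl) (minus_fam S (of_list Bl)).

Definition good (S : family) (Bl : list setN) (c : setN -> nat) (Dl : list setN) (T : setN) :=
  minus_fam (minus_fam S (of_list Bl)) (of_list Dl) T /\ nonempty T /\
  forall l, incl l Dl -> half_matches_set c (of_list Bl) (union (bigunion l) T).

Fixpoint histf (next : list setN -> setN) (n : nat) : list setN :=
  match n with 0 => nil | Datatypes.S n => next (histf next n) :: histf next n end.

Lemma hist_valid S Bl c next (Hn : forall Dl, valid S Bl Dl -> good S Bl c Dl (next Dl)) n :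
  valid S Bl (histf next n).
Proof.
  induction n as [|n IH]; intros A HA; simpl in HA.
  - destruct HA.
  - destruct HA as [<-|HA]; auto. apply (Hn _ IH).
Qed.

Lemma hist_in next m n : m < n -> In (next (histf next m)) (histf next n).
Proof.
  induction n; intros H; [lia|]. simpl.
  destruct (Nat.eq_dec m n) as [->|]; [left; auto|right; apply IHn; lia].
Qed.

Lemma hist_incl next m n : m <= n -> incl (histf next m) (histf next n).
Proof.
  induction n; intros H.
  - replace m with 0 by lia. apply incl_refl.
  - destruct (Nat.eq_dec m (Datatypes.S n)) as [->|]; [apply incl_refl|].
    apply incl_tl. apply IHn. lia.
Qed.

Lemma step (S : family) (Bl : list setN) (c : setN -> nat)
  (hS : IP_set S) (hB : subfamily (of_list Bl) S)
  (Hn : ~ (exists Dl : list setN,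
      subfamily (of_list Dl) (minus_fam S (of_list Bl)) /\
      forall T, minus_fam (minus_fam S (of_list Bl)) (of_list Dl) T ->
        exists D, NU (of_list Dl) D /\
          ~ half_matches_set c (of_list Bl) (union D T)))
  Dl : valid S Bl Dl -> exists T, good S Bl c Dl T.
Proof.
  intro HV.
  assert (hfin := proj1 hS). assert (Hu := proj1 (proj2 hS)).
  destruct (fin_list_bound (Dl ++ Bl)) as [M HM].
  { intros A HA. apply hfin. apply in_app_or in HA. destruct HA as [HA|HA].
    - apply (HV A HA). - apply hB; exact HA. }
  destruct (ip_far S hS M) as [G [GS [Gne Gfar]]].
  assert (Gd : forall A, In A (Dl ++ Bl) -> disjoint G A).
  { intros A HA x. destruct (G x) eqn:E1; auto. destruct (A x) eqn:E2; auto.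
    specialize (Gfar x E1). specialize (HM A x HA E2). lia. }
  assert (HV' : valid S Bl (G :: Dl)).
  { intros A [<-|HA]; [|apply HV; exact HA]. split; auto.
    intros B HB. apply Gd. apply in_or_app; right; exact HB. }
  assert (HT : exists T, minus_fam (minus_fam S (of_list Bl)) (of_list (G :: Dl)) T /\
     forall D, NU (of_list (G :: Dl)) D -> half_matches_set c (of_list Bl) (union D T)).
  { apply NNPP. intro H. apply Hn. exists (G :: Dl). split; [exact HV'|].
    intros T HT. apply NNPP. intro H2. apply H. exists T. split; auto.
    intros D HD. apply NNPP. intro H3. apply H2. exists D. auto. }
  destruct HT as [T [[[TS TB] TD] Thm]].
  exists (union G T). split; [split; [split|]|split].
  - apply Hu; auto.
  - intros B HB. apply disjoint_union; auto. apply Gd. apply in_or_app; right; exact HB.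
  - intros A HA. apply disjoint_union; [|apply TD; right; exact HA].
    apply Gd. apply in_or_app; left; exact HA.
  - destruct Gne as [x Hx]. exists x. unfold union. rewrite Hx. reflexivity.
  - intros l Hl.
    replace (union (bigunion l) (union G T)) with (union (bigunion (G :: l)) T).
    + apply Thm. split.
      * destruct Gne as [x Hx]. exists x. unfold bigunion. simpl. rewrite Hx. reflexivity.
      * exists (G :: l). split; auto. intros A [<-|HA]; [left; auto|right; apply Hl; exact HA].
    + extensionality x. unfold union, bigunion. simpl.
      destruct (G x), (T x), (existsb (fun A => A x) l); reflexivity.
Qed.

Theorem lemma2p1 (S : family) (Bl : list setN) (r : nat) (c : setN -> nat)
  (hS : IP_set S)
  (hB : subfamily (of_list Bl) S)
  (hr : 1 <= r)
  (hc : forall T, NU S T -> 1 <= c T <= r) :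
  (exists Dl : list setN,
      subfamily (of_list Dl) (minus_fam S (of_list Bl)) /\
      forall T, minus_fam (minus_fam S (of_list Bl)) (of_list Dl) T ->
        exists D, NU (of_list Dl) D /\
          ~ half_matches_set c (of_list Bl) (union D T))
  \/
  (exists TT : family,
      IP_set TT /\ subfamily TT (minus_fam S (of_list Bl)) /\
      half_matches_fam c (of_list Bl) TT).
Proof.
  destruct (classic (exists Dl : list setN,
      subfamily (of_list Dl) (minus_fam S (of_list Bl)) /\
      forall T, minus_fam (minus_fam S (of_list Bl)) (of_list Dl) T ->
        exists D, NU (of_list Dl) D /\
          ~ half_matches_set c (of_list Bl) (union D T))) as [H|Hn]; [left; exact H|right].
  assert (Hex : forall Dl, exists T, valid S Bl Dl -> good S Bl c Dl T).
  { intro Dl. destruct (classic (valid S Bl Dl)) as [HV|HV].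
    - destruct (step S Bl c hS hB Hn Dl HV) as [T HT]. exists T; auto.
    - exists (fun _ => false). intro; contradiction. }
  set (next := fun Dl => proj1_sig (constructive_indefinite_description _ (Hex Dl))).
  assert (Hnext : forall Dl, valid S Bl Dl -> good S Bl c Dl (next Dl)).
  { intros Dl HV. unfold next. destruct (constructive_indefinite_description _ (Hex Dl)); simpl; auto. }
  clearbody next.
  set (t := fun n => next (histf next n)).
  assert (Ht : forall n, good S Bl c (histf next n) (t n)).
  { intro n. apply Hnext. apply (hist_valid S Bl c next Hnext). }
  assert (HV := hist_valid S Bl c next Hnext).
  destruct hS as [hfin [Hu _]].
  set (TT := fun X => exists n l, incl l (histf next n) /\ X = union (bigunion l) (t n)).
  assert (TTsub : subfamily TT (minus_fam S (of_list Bl))).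
  { intros X [n [l [Hl ->]]]. destruct (Ht n) as [[[tS tB] _] _]. split.
    - apply S_bigunion; auto. intros A HA. apply (HV n A (Hl A HA)).
    - intros B HB. apply disjoint_union; auto. apply disjoint_bigunion.
      intros A HA. apply (HV n A (Hl A HA)); auto. }
  assert (Hlt : forall n n' l l', n < n' -> incl l (histf next n) -> incl l' (histf next n') ->
     TT (union (union (bigunion l) (t n)) (union (bigunion l') (t n')))).
  { intros n n' l l' Hnn Hl Hl'. exists n', (t n :: l ++ l'). split.
    - intros A [<-|HA]. apply hist_in; auto. apply in_app_or in HA. destruct HA as [HA|HA]; auto.
      apply (hist_incl next n n'); [lia|auto].
    - extensionality x. unfold union. change (bigunion (t n :: l ++ l') x) with (t n x || bigunion (l ++ l') x).
      rewrite bigunion_app. destruct (bigunion l x), (bigunion l' x), (t n x), (t n' x); reflexivity. }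
  exists TT. split; [|split; [exact TTsub|]].
  - split; [|split].
    + intros X HX. apply hfin. apply (TTsub X HX).
    + intros X X' [n [l [Hl ->]]] [n' [l' [Hl' ->]]].
      destruct (lt_eq_lt_dec n n') as [[Hnn|<-]|Hnn].
      * apply Hlt; auto.
      * exists n, (l ++ l'). split. intros A HA. apply in_app_or in HA. destruct HA; auto.
        extensionality x. unfold union. rewrite bigunion_app.
        destruct (bigunion l x), (bigunion l' x), (t n x); reflexivity.
      * replace (union (union (bigunion l) (t n)) (union (bigunion l') (t n'))) with
           (union (union (bigunion l') (t n')) (union (bigunion l) (t n))).
        apply Hlt; auto. extensionality x. unfold union. apply orb_comm.
    + exists t. assert (Hd : forall i j, i < j -> disjoint (t i) (t j)).
      { intros i j Hij. apply disjoint_sym. destruct (Ht j) as [[_ Hd] _]. apply Hd.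
        apply hist_in. exact Hij. }
      split; [|split].
      * intros i j Hij. apply NNPP. intro Hne.
        assert (Hd' : disjoint (t i) (t j)).
        { destruct (Nat.lt_gt_cases i j) as [[H|H] _]; auto. apply disjoint_sym; auto. }
        rewrite Hij in Hd'. destruct (Ht j) as [_ [[x Hx] _]]. specialize (Hd' x).
        rewrite Hx in Hd'. discriminate.
      * intro i. exists i, nil. split. intros A []. symmetry. apply union_empty_l.
      * intros i j Hij. destruct (Nat.lt_gt_cases i j) as [[H|H] _]; auto. apply disjoint_sym; auto.
  - intros X [n [l [Hl ->]]]. destruct (Ht n) as [_ [_ Hm]]. apply Hm. exact Hl.
Qed.
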